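(* Let $t$ be a positive integer and let $G$ be a graph on $4t-1$ vertices with $\alpha(G)=2$ and $\mathrm{cm}(G)\le t-1$. Let $S_0,S_1,S_2$ be pairwise disjoint subsets of $V(G)$ (some possibly empty), each inducing a clique in $G$, such that $S_0$ is complete to $S_1\cup S_2$ and $S_1$ is anti-complete to $S_2$. Then $|S_0|+|S_1|+|S_2|\le t-1$.
   Context: All graphs are finite and simple. $\alpha(G)$ is the independence number. A matching $M$ in $G$ is connected if for every two edges of $M$ there is an edge of $G$ joining an endpoint of one to an endpoint of the other; $\mathrm{cm}(G)$ is the maximum size of a connected matching in $G$. For disjoint vertex sets $A,B$: $A$ is complete to $B$ if every vertex of $A$ is adjacent to every vertex of $B$; $A$ is anti-complete to $B$ if there is no edge between them. *)

(* Defs.v *)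
From mathcomp Require Import all_boot.
Set Implicit Arguments. Unset Strict Implicit. Unset Printing Implicit Defensive.

Definition simple_graph (T : finType) (e : rel T) : Prop :=
  symmetric e /\ irreflexive e.

Definition independent (T : finType) (e : rel T) (A : {set T}) : bool :=
  [forall x in A, forall y in A, ~~ e x y].

Definition alpha (T : finType) (e : rel T) : nat :=
  \max_(A : {set T} | independent e A) #|A|.

Definition is_clique (T : finType) (e : rel T) (A : {set T}) : bool :=
  [forall x in A, forall y in A, (x != y) ==> e x y].

Definition complete_to (T : finType) (e : rel T) (A B : {set T}) : bool :=
  [forall x in A, forall y in B, e x y].

Definition anticomplete_to (T : finType) (e : rel T) (A B : {set T}) : bool :=
  [forall x in A, forall y in B, ~~ e x y].

Definition is_matching (T : finType) (e : rel T) (M : {set T * T}) : bool :=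
  [forall p in M, e p.1 p.2] &&
  [forall p in M, forall q in M, (p != q) ==>
     [&& p.1 != q.1, p.1 != q.2, p.2 != q.1 & p.2 != q.2]].

Definition is_connected_matching (T : finType) (e : rel T) (M : {set T * T}) : bool :=
  is_matching e M &&
  [forall p in M, forall q in M, (p != q) ==>
     [|| e p.1 q.1, e p.1 q.2, e p.2 q.1 | e p.2 q.2]].

Definition cm (T : finType) (e : rel T) : nat :=
  \max_(M : {set T * T} | is_connected_matching e M) #|M|.

(* Main.v *)
Require Import Defs.
From mathcomp Require Import all_boot zify.
Set Implicit Arguments. Unset Strict Implicit. Unset Printing Implicit Defensive.

Lemma sub_card (T : finType) (A : {set T}) k :
  k <= #|A| -> exists B : {set T}, B \subset A /\ #|B| = k.
Proof.
elim: k => [|k IH] hk; first by exists set0; rewrite sub0set cards0.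
have [B [BA cB]] := IH (ltnW hk).
have : ~~ (A \subset B).
  by apply/negP => /subset_leq_card; rewrite cB; lia.
case/subsetPn => x xA xB.
exists (x |: B); split; first by rewrite subUset sub1set xA BA.
by rewrite cardsU1 xB cB.
Qed.

Lemma greedy (T : finType) (n : nat) (A F : {set T}) (D : T -> {set T}) :
  #|A| = n ->
  (forall x, x \in A -> #|A| + #|F| <= #|D x|) ->
  exists f : T -> T, (forall x, x \in A -> f x \in D x /\ f x \notin F)
     /\ {in A &, injective f}.
Proof.
elim: n A F => [|n IH] A F cA hD.
  exists id; split=> [x|x y]; by move/eqP: cA; rewrite cards_eq0 => /eqP ->; rewrite inE.
have : 0 < #|A| by rewrite cA.
case/card_gt0P => x xA.
have : ~~ (D x \subset F).
  by apply/negP => /subset_leq_card; have := hD x xA; rewrite cA; lia.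
case/subsetPn => y yD yF.
have cA' : #|A :\ x| = n by move: cA; rewrite (cardsD1 x) xA; case.
have hD' : forall z, z \in A :\ x -> #|A :\ x| + #|y |: F| <= #|D z|.
  move=> z; rewrite inE => /andP [_ zA]; have := hD z zA.
  rewrite cA cA' cardsU1 yF; lia.
have [g [hg ig]] := IH _ _ cA' hD'.
exists (fun z => if z == x then y else g z); split.
  move=> z zA; case: eqP => [->|/eqP zx]; first by [].
  have zA' : z \in A :\ x by rewrite in_setD1 zx zA.
  have [g1 g2] := hg z zA'; split=> //.
  by move: g2; rewrite inE negb_or => /andP [].
move=> z1 z2 z1A z2A /=.
case: eqP => [->|/eqP z1x]; case: eqP => [->|/eqP z2x] //.
- move=> ey; have z2A' : z2 \in A :\ x by rewrite in_setD1 z2x z2A.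
  have [_ h] := hg z2 z2A'; by move: h; rewrite in_setU1 -ey eqxx.
- move=> ey; have z1A' : z1 \in A :\ x by rewrite in_setD1 z1x z1A.
  have [_ h] := hg z1 z1A'; by move: h; rewrite in_setU1 ey eqxx.
- by apply: ig; rewrite in_setD1 ?z1x ?z2x ?z1A ?z2A.
Qed.

Lemma match_lemma (T : finType) (e : rel T) (A : {set T}) (f : T -> T) :
  (forall x, x \in A -> f x \notin A /\ e x (f x)) ->
  {in A &, injective f} ->
  (forall x y, x \in A -> y \in A -> x != y ->
     [|| e x y, e x (f y), e (f x) y | e (f x) (f y)]) ->
  #|A| <= cm e.
Proof.
move=> hf inj hc.
pose M := [set (x, f x) | x in A].
have cM : #|M| = #|A|.
  by apply: card_in_imset => x y _ _ [].
rewrite -cM /cm; apply: (@leq_bigmax_cond _ (fun M => is_connected_matching e M)).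
have mem : forall p, p \in M -> exists2 x, x \in A & p = (x, f x).
  by move=> p /imsetP.
have neq : forall x y, x \in A -> y \in A -> (x, f x) != (y, f y) -> x != y.
  by move=> x y _ _; apply: contra => /eqP ->.
apply/andP; split; first (apply/andP; split).
- apply/forallP => p; apply/implyP => /mem [x xA ->] /=; exact: (hf x xA).2.
- apply/forallP => p; apply/implyP => /mem [x xA ->].
  apply/forallP => q; apply/implyP => /mem [y yA ->].
  apply/implyP => /(neq _ _ xA yA) xy /=.
  rewrite xy /=.
  have h1 : x != f y by apply: contraNneq (hf y yA).1 => <-.
  have h2 : f x != y by apply: contraNneq (hf x xA).1 => ->.
  rewrite h1 h2 /=; apply: contra xy => /eqP /(inj _ _ xA yA) ->; by [].
- apply/forallP => p; apply/implyP => /mem [x xA ->].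
  apply/forallP => q; apply/implyP => /mem [y yA ->].
  apply/implyP => /(neq _ _ xA yA) xy /=; exact: hc.
Qed.

Lemma noind3 (T : finType) (e : rel T) : simple_graph e -> alpha e = 2 ->
  forall x y z, x != y -> y != z -> x != z -> ~~ e x y -> ~~ e y z -> ~~ e x z -> False.
Proof.
move=> [sym irr] ha x y z xy yz xz nxy nyz nxz.
have ind : independent e [set x; y; z].
  apply/forallP => a; apply/implyP; rewrite !inE -orbA => /or3P [] /eqP ->;
  apply/forallP => b; apply/implyP; rewrite !inE -orbA => /or3P [] /eqP ->;
  rewrite ?irr // 1?sym //.
have c3 : #|[set x; y; z]| = 3.
  rewrite -setUA cardsU1 cards2 yz !inE negb_or xy xz; by [].
have := @leq_bigmax_cond _ (fun A => independent e A) (fun A => #|A|) _ ind.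
by rewrite -/(alpha e) ha c3.
Qed.

Definition clq (T : finType) (e : rel T) (K : {set T}) :=
  forall x y, x \in K -> y \in K -> x != y -> e x y.

Lemma big_clique (T : finType) (e : rel T) (K : {set T}) t :
  clq e K -> t + t <= #|K| -> t <= cm e.
Proof.
move=> cK hK.
have [A [AK cA]] := sub_card (leq_trans (leq_addr t t) hK).
have cKA : #|K :\: A| = #|K| - t.
  by rewrite cardsD (setIidPr AK) cA.
have [f [hf inj]] := @greedy _ t A set0 (fun _ => K :\: A) cA
  (fun x _ => ltac:(rewrite cards0 addn0 cKA cA; lia)).
rewrite -cA; apply: match_lemma inj _.
  move=> x xA; have [+ _] := hf x xA; rewrite inE => /andP [fA fK]; split=> //.
  apply: cK => //; first exact: (subsetP AK).
  by apply: contraNneq fA => <-.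
move=> x y xA yA xy; apply/orP; left; apply: cK => //; exact: (subsetP AK).
Qed.

Lemma clique_small (T : finType) (e : rel T) (K : {set T}) t :
  simple_graph e -> alpha e = 2 -> #|T| = 4 * t - 1 ->
  clq e K -> t <= #|K| -> t <= cm e.
Proof.
move=> sg ha cT cK hK.
have [->|tpos] := posnP t; first by [].
have [A [AK cA]] := sub_card hK.
have cAc : #|~: A| = 3 * t - 1 by have := cardsC A; rewrite cA cT; lia.
pose D := fun x => ~: A :&: [set y | e x y].
case: (boolP [forall x in A, t <= #|D x|]) => [/forallP hall | /forallPn [x]].
  have [f [hf inj]] := @greedy _ t A set0 D cA
    (fun x xA => ltac:(rewrite cards0 addn0 cA; exact: (implyP (hall x) xA))).
  rewrite -cA; apply: match_lemma inj _.
    move=> x xA; have [+ _] := hf x xA; rewrite !inE => /andP [fA fK]; split=> //.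
  move=> x y xA yA xy; apply/orP; left; apply: cK => //; exact: (subsetP AK).
rewrite negb_imply => /andP [xA]; rewrite -ltnNge => hx.
pose C := ~: A :\: [set y | e x y].
have cC : t + t <= #|C|.
  have := cardsID [set y | e x y] (~: A); rewrite -/(D x) cAc.
  move: hx; rewrite /C; move: (#|D x|) (#|~: A :\: [set y | e x y]|). lia.
apply: (big_clique (K := C)) => // y z; rewrite !inE => /andP [ny yA] /andP [nz zA] yz.
apply/negPn/negP => nyz.
apply: (noind3 sg ha (x := x) (y := y) (z := z)) => //.
- by apply: contraNneq yA => <-.
- by apply: contraNneq zA => <-.
Qed.

Lemma disj_card (T : finType) (A B : {set T}) :
  (forall x, x \in A -> x \notin B) -> #|A :|: B| = #|A| + #|B|.
Proof.
move=> H; rewrite cardsU.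
have -> : A :&: B = set0.
  apply/setP => x; rewrite !inE; case: (boolP (x \in A)) => //= /H; by case: (x \in B).
by rewrite cards0 subn0.
Qed.

Definition Rset (T : finType) (S0 S1 S2 : {set T}) :=
  [set r | [&& r \notin S0, r \notin S1 & r \notin S2]].

Lemma cardR (T : finType) (S0 S1 S2 : {set T}) :
  (forall x, x \in S0 -> x \notin S1) -> (forall x, x \in S0 -> x \notin S2) ->
  (forall x, x \in S1 -> x \notin S2) ->
  #|Rset S0 S1 S2| + #|S0| + #|S1| + #|S2| = #|T|.
Proof.
move=> d01 d02 d12.
have -> : Rset S0 S1 S2 = ~: (S0 :|: S1 :|: S2).
  by apply/setP => x; rewrite !inE !negb_or andbA.
have := cardsC (S0 :|: S1 :|: S2); rewrite disj_card; last first.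
  move=> x; rewrite inE => /orP [/d02|/d12] //.
rewrite disj_card //; lia.
Qed.

Definition nonnb (T : finType) (e : rel T) v := [set u | (u != v) && ~~ e v u].

Lemma nonnb_small (T : finType) (e : rel T) t v :
  simple_graph e -> alpha e = 2 -> #|T| = 4 * t - 1 -> cm e < t ->
  #|nonnb e v| < t.
Proof.
move=> sg ha cT cmlt; rewrite ltnNge; apply/negP => h.
suff cl : clq e (nonnb e v).
  by have := clique_small sg ha cT cl h; rewrite leqNgt cmlt.
move=> x y; rewrite !inE => /andP [xv nx] /andP [yv ny] xy.
apply/negPn/negP => nxy; apply: (noind3 sg ha (x := v) (y := x) (z := y)) => //.
- by rewrite eq_sym.
- by rewrite eq_sym.
Qed.

Lemma option_lemma (T : finType) (e : rel T) t (S0 S1 S2 Q1 : {set T}) :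
  simple_graph e -> alpha e = 2 -> #|T| = 4 * t - 1 -> cm e < t ->
  (forall x, x \in S0 -> x \notin S1) -> (forall x, x \in S0 -> x \notin S2) ->
  (forall x, x \in S1 -> x \notin S2) ->
  clq e S0 -> clq e S1 -> clq e S2 ->
  (forall x y, x \in S0 -> y \in S1 -> e x y) ->
  (forall x y, x \in S0 -> y \in S2 -> e x y) ->
  (forall x y, x \in S1 -> y \in S2 -> ~~ e x y) ->
  #|S0| + #|S1| + #|S2| = t ->
  (forall r, r \in Q1 -> r \in Rset S0 S1 S2 /\ forall b, b \in S2 -> e r b) ->
  #|S1| + t <= #|Q1| + #|S2| + 1 -> False.
Proof.
move=> sg ha cT cmlt d01 d02 d12 c0 c1 c2 k1 k2 an sz hQ hq.
have [sym irr] := sg.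
have tpos : 0 < t by apply: leq_ltn_trans cmlt.
have nbs := fun v => nonnb_small v sg ha cT cmlt.
have cRT := cardR d01 d02 d12.
set R := Rset S0 S1 S2 in hQ cRT.
have cR : #|R| = 3 * t - 1 by lia.
pose N := fun v => [set u | e v u].
have [f1 [hf1 inj1]] : exists f : T -> T, (forall x, x \in S1 -> f x \in Q1 :&: N x /\ f x \notin set0)
     /\ {in S1 &, injective f}.
  apply: (@greedy _ _ S1 set0 (fun a => Q1 :&: N a) erefl) => a aS1.
  rewrite cards0 addn0.
  have h1 := cardsID (N a) Q1.
  have h2 : #|(Q1 :\: N a) :|: S2| <= #|nonnb e a|.
    apply: subset_leq_card; apply/subsetP => u; rewrite !inE => /orP [/andP [nu uQ]|uS2].
      have [+ _] := hQ u uQ; rewrite !inE => /and3P [_ uS1 _].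
      by rewrite nu andbT; apply: contraNneq uS1 => ->.
    rewrite an // andbT; apply: contraTneq uS2 => ->; exact: d12.
  rewrite disj_card in h2; last first.
    move=> u; rewrite !inE => /andP [_ uQ]; have [+ _] := hQ u uQ; rewrite !inE.
    by case/and3P.
  have := nbs a; lia.
have [f2 [hf2 inj2]] : exists f : T -> T,
    (forall x, x \in S0 :|: S2 -> f x \in R :&: N x /\ f x \notin f1 @: S1)
     /\ {in S0 :|: S2 &, injective f}.
  apply: (@greedy _ _ (S0 :|: S2) (f1 @: S1) (fun v => R :&: N v) erefl) => v vS.
  rewrite disj_card //.
  have h0 := leq_imset_card f1 S1.
  have h1 := cardsID (N v) R.
  have h2 : #|R :\: N v| <= #|nonnb e v|.
    apply: subset_leq_card; apply/subsetP => u; rewrite !inE => /andP [nu uR].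
    rewrite nu andbT; apply: contraTneq uR => ->.
    by move: vS; rewrite !inE => /orP [] ->; rewrite ?andbF.
  have := nbs v; lia.
pose f := fun x => if x \in S1 then f1 x else f2 x.
pose S := S0 :|: S1 :|: S2.
have cS : #|S| = t.
  rewrite /S disj_card; last by move=> x; rewrite inE => /orP [/d02|/d12].
  by rewrite disj_card.
have inS : forall x, x \in S -> x \notin S1 -> x \in S0 :|: S2.
  move=> x; rewrite /S !inE => /orP [/orP [->|->]|->] //; by rewrite orbT.
have fR : forall x, x \in S -> f x \in R :&: N x.
  move=> x xS; rewrite /f; case: ifP => xS1.
    have [+ _] := hf1 x xS1; rewrite inE => /andP [/hQ [h _] hN].
    by rewrite inE h hN.
  by have [] := hf2 x (inS x xS (negbT xS1)).
have RS : forall x, x \in R -> x \notin S.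
  by move=> x; rewrite /S /R !inE => /and3P [/negbTE -> /negbTE -> /negbTE ->].
suff : t <= cm e by rewrite leqNgt cmlt.
rewrite -cS; apply: (@match_lemma _ e S f).
- move=> x xS; have := fR x xS; rewrite inE => /andP [/RS h hN]; split=> //.
  by move: hN; rewrite inE.
- move=> x y xS yS; rewrite /f; case: ifP => xS1; case: ifP => yS1.
  + exact: inj1.
  + move=> ex; have [_] := hf2 y (inS y yS (negbT yS1)).
    by rewrite -ex (imset_f f1 xS1).
  + move=> ex; have [_] := hf2 x (inS x xS (negbT xS1)).
    by rewrite ex (imset_f f1 yS1).
  + by apply: inj2; apply: inS => //; rewrite ?xS1 ?yS1.
- have e0 : forall u w, u \in S0 -> w \in S -> u != w -> e u w.
    move=> u w u0; rewrite /S !inE => /orP [/orP [w0|w1]|w2] uw.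
    + exact: c0.
    + exact: k1.
    + exact: k2.
  have q1 : forall u b, u \in S1 -> b \in S2 -> e (f u) b.
    move=> u b u1 b2; rewrite /f u1; have [+ _] := hf1 u u1.
    by rewrite inE => /andP [/hQ [_ h] _]; apply: h.
  move=> x y xS yS xy.
  have yxS := xS; have yyS := yS.
  move: xS yS; rewrite /S !inE => /orP [/orP [x0|x1]|x2] /orP [/orP [y0|y1]|y2].
  + by rewrite e0.
  + by rewrite e0.
  + by rewrite e0.
  + by rewrite sym e0 // eq_sym.
  + by rewrite c1.
  + by rewrite q1 ?orbT.
  + by rewrite sym e0 // eq_sym.
  + by rewrite (sym x (f y)) q1 ?orbT.
  + by rewrite c2.
Qed.

Theorem theorem1p5 (t : nat) (T : finType) (e : rel T)
    (S0 S1 S2 : {set T}) :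
  0 < t ->
  simple_graph e ->
  #|T| = 4 * t - 1 ->
  alpha e = 2 ->
  cm e <= t - 1 ->
  [disjoint S0 & S1] -> [disjoint S0 & S2] -> [disjoint S1 & S2] ->
  is_clique e S0 -> is_clique e S1 -> is_clique e S2 ->
  complete_to e S0 (S1 :|: S2) ->
  anticomplete_to e S1 S2 ->
  #|S0| + #|S1| + #|S2| <= t - 1.
Proof.
move=> tpos sg cT ha hcm D01 D02 D12 C0 C1 C2 Comp Anti.
have [sym irr] := sg.
rewrite leqNgt; apply/negP => hbig.
have cmlt : cm e < t by lia.
have toclq : forall S, is_clique e S -> clq e S.
  move=> S /forallP h x y xS yS xy.
  by have := implyP (h x) xS => /forallP /(_ y) /implyP /(_ yS) /implyP /(_ xy).
have [A0 [A0S cA0]] := sub_card (geq_minl #|S0| t).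
have [A1 [A1S cA1]] := sub_card (geq_minl #|S1| (t - minn #|S0| t)).
have [A2 [A2S cA2]] : exists A2 : {set T}, A2 \subset S2 /\
    #|A2| = t - minn #|S0| t - minn #|S1| (t - minn #|S0| t).
  apply: sub_card; lia.
have s0 := subsetP A0S; have s1 := subsetP A1S; have s2 := subsetP A2S.
have d01 : forall x, x \in A0 -> x \notin A1.
  by move=> x /s0 x0; apply/negP => /s1; rewrite (disjointFr D01 x0).
have d02 : forall x, x \in A0 -> x \notin A2.
  by move=> x /s0 x0; apply/negP => /s2; rewrite (disjointFr D02 x0).
have d12 : forall x, x \in A1 -> x \notin A2.
  by move=> x /s1 x0; apply/negP => /s2; rewrite (disjointFr D12 x0).
have c0 : clq e A0 by move=> x y /s0 hx /s0 hy; apply: (toclq _ C0).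
have c1 : clq e A1 by move=> x y /s1 hx /s1 hy; apply: (toclq _ C1).
have c2 : clq e A2 by move=> x y /s2 hx /s2 hy; apply: (toclq _ C2).
have k : forall x y, x \in S0 -> y \in S1 :|: S2 -> e x y.
  move=> x y x0 y12; move/forallP: Comp => /(_ x) /implyP /(_ x0).
  by move/forallP => /(_ y) /implyP /(_ y12).
have k1 : forall x y, x \in A0 -> y \in A1 -> e x y.
  by move=> x y /s0 x0 /s1 y1; apply: k => //; rewrite inE y1.
have k2 : forall x y, x \in A0 -> y \in A2 -> e x y.
  by move=> x y /s0 x0 /s2 y2; apply: k => //; rewrite inE y2 orbT.
have an : forall x y, x \in A1 -> y \in A2 -> ~~ e x y.
  move=> x y /s1 x1 /s2 y2; move/forallP: Anti => /(_ x) /implyP /(_ x1).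
  by move/forallP => /(_ y) /implyP /(_ y2).
have sz : #|A0| + #|A1| + #|A2| = t by rewrite cA0 cA1 cA2; lia.
pose Q1 := [set r in Rset A0 A1 A2 | [forall b in A2, e r b]].
pose Q2 := [set r in Rset A0 A1 A2 | [forall a in A1, e r a]].
case: (leqP (#|A1| + t) (#|Q1| + #|A2| + 1)) => h1.
  apply: (option_lemma sg ha cT cmlt d01 d02 d12 c0 c1 c2 k1 k2 an sz _ h1).
  move=> r; rewrite inE => /andP [rR /forallP h]; split=> // b b2.
  exact: (implyP (h b) b2).
case: (leqP (#|A2| + t) (#|Q2| + #|A1| + 1)) => h2.
  have d21 : forall x, x \in A2 -> x \notin A1.
    by move=> x x2; apply/negP => /d12; rewrite x2.
  have an' : forall x y, x \in A2 -> y \in A1 -> ~~ e x y.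
    by move=> x y x2 y1; rewrite sym; apply: an.
  have sz' : #|A0| + #|A2| + #|A1| = t by lia.
  apply: (option_lemma sg ha cT cmlt d02 d01 d21 c0 c2 c1 k2 k1 an' sz' _ h2).
  move=> r; rewrite inE => /andP [rR /forallP h]; split.
    by move: rR; rewrite !inE => /and3P [-> -> ->].
  move=> b b1; exact: (implyP (h b) b1).
have cR := cardR d01 d02 d12.
have sub : Rset A0 A1 A2 \subset Q1 :|: Q2.
  apply/subsetP => r; rewrite /Rset inE => /and3P [r0 ra rb].
  rewrite /Q1 /Q2 /Rset !inE r0 ra rb /=.
  case: (boolP [forall b in A2, e r b]) => //= /forallPn [b].
  rewrite negb_imply => /andP [b2 nrb].
  apply/forallP => a; apply/implyP => a1; apply/negPn/negP => nra.
  apply: (noind3 sg ha (x := a) (y := b) (z := r)).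
  - by apply/eqP => ab; move: (d12 a a1); rewrite ab b2.
  - by apply: contraNneq rb => <-.
  - by apply: contraNneq ra => <-.
  - exact: an.
  - by rewrite sym.
  - by rewrite sym.
have := subset_leq_card sub; rewrite cardsU.
move: h1 h2 cR sz; rewrite cT.
move: (#|Q1 :&: Q2|) (#|Q1|) (#|Q2|) (#|Rset A0 A1 A2|) (#|A0|) (#|A1|) (#|A2|).
lia.
Qed.
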